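(* For $d\ge1$, let $A(d)$ be the sequence of the numbers $A(d,i,j)$, $0\le i\le d-1$, $1\le j\le d$, listed in increasing order of the pairs $(i,j)$ with respect to the total order $(i,j)<(i',j')$ iff $i<i'$, or $i=i'$ and $j>j'$. Then $A(d)$ is symmetric and unimodal; in particular its peak lies in the middle.
   Context: $S_d$ is the symmetric group on $[d]=\{1,\dots,d\}$. For $\sigma\in S_d$, $\mathrm{des}(\sigma)=\#\{i\in[d-1]:\sigma(i)>\sigma(i+1)\}$. For $0\le i\le d-1$ and $1\le j\le d$, $A(d,i,j)=\#\{\sigma\in S_d:\mathrm{des}(\sigma)=i,\ \sigma(1)=j\}$. A sequence $(s_0,\dots,s_N)$ is unimodal if $s_0\le\dots\le s_p\ge\dots\ge s_N$ for some $p$, and symmetric if $s_t=s_{N-t}$ for all $t$. *)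

(* Defs.v *)
From mathcomp Require Import all_boot all_fingroup.
Set Implicit Arguments. Unset Strict Implicit. Unset Printing Implicit Defensive.

(* A permutation sigma of [d] = {1..d} is represented by s : {perm 'I_d},
   with sigma(k) = (s (k-1)) + 1.  Its one-line notation (0-based values): *)
Definition oneline (d : nat) (s : {perm 'I_d}) : seq nat :=
  [seq val (s i) | i <- enum 'I_d].

Definition sigma_at (d : nat) (s : {perm 'I_d}) (k : nat) : nat :=
  (nth 0 (oneline s) k.-1).+1.

Definition des (d : nat) (s : {perm 'I_d}) : nat :=
  count (fun i => sigma_at s i.+1 < sigma_at s i) (iota 1 d.-1).

Definition A (d i j : nat) : nat :=
  #|[pred s : {perm 'I_d} | (des s == i) && (sigma_at s 1 == j)]|.

Definition Aseq (d : nat) : seq nat :=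
  flatten [seq [seq A d i j | j <- rev (iota 1 d)] | i <- iota 0 d].

Definition symmetric_seq (s : seq nat) : Prop :=
  forall t, t < size s -> nth 0 s t = nth 0 s (size s - 1 - t).

Definition unimodal_seq (s : seq nat) : Prop :=
  exists p, p < size s /\
    (forall t, t < p -> nth 0 s t <= nth 0 s t.+1) /\
    (forall t, p <= t -> t.+1 < size s -> nth 0 s t.+1 <= nth 0 s t).

(* Main.v *)
Require Import Defs.
From mathcomp Require Import all_boot all_fingroup.
From Stdlib Require Import Lia.
Set Implicit Arguments. Unset Strict Implicit. Unset Printing Implicit Defensive.

Ltac slia := intros; repeat match goal with
 | H : is_true (leq _ _) |- _ => apply (elimT leP) in H
 | H : is_true (~~ leq _ _) |- _ => rewrite -ltnNge in H
 | H : (leq _ _) = false |- _ => apply negbT in H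
 | H : is_true (@eq_op _ _ _) |- _ => apply (elimT eqP) in H
 | |- is_true (leq _ _) => apply/leP
 | |- is_true (@eq_op _ _ _) => apply/eqP
 | |- is_true (~~ leq _ _) => rewrite -ltnNge
 | |- leq _ _ = false => apply/negbTE; rewrite -ltnNge
 | |- leq ?a ?b = true => change (is_true (leq a b))
 | H : leq ?a ?b = true |- _ => change (is_true (leq a b)) in H
 end; change addn with Nat.add in *; change subn with Nat.sub in *; change muln with Nat.mul in *; change predn with Nat.pred in *;
  lia.

Lemma nth_flat (T : Type) (x0 : T) (F : nat -> seq T) m k a i r :
  (forall x, size (F x) = m) -> r < m ->
  nth x0 (flatten [seq F x | x <- iota a k]) (i * m + r) =
  if i < k then nth x0 (F (a + i)) r else x0.
Proof.
move=> HF Hr; elim: k a i => [|k IH] a i /=; first by rewrite nth_nil.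
rewrite nth_cat HF; case: i => [|i].
  by rewrite mul0n add0n Hr addn0.
have -> : (i.+1 * m + r < m) = false by apply/negbTE; rewrite -leqNgt; slia.
have -> : i.+1 * m + r - m = i * m + r by slia.
by rewrite IH addSnnS ltnS.
Qed.

Lemma size_flat (T : Type) (F : nat -> seq T) m k a :
  (forall x, size (F x) = m) -> size (flatten [seq F x | x <- iota a k]) = k * m.
Proof.
move=> HF; elim: k a => [|k IH] a //=.
by rewrite size_cat HF IH mulSn.
Qed.

Lemma size_inner d i : size [seq A d i j | j <- rev (iota 1 d)] = d.
Proof. by rewrite size_map size_rev size_iota. Qed.

Lemma size_Aseq d : size (Aseq d) = d * d.
Proof. by rewrite /Aseq (size_flat (m := d)) // => x; apply: size_inner. Qed.

Lemma des_le d (s : {perm 'I_d}) : des s <= d.-1.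
Proof. by rewrite /des; apply: leq_trans (count_size _ _) _; rewrite size_iota. Qed.

Lemma A_big d i j : 0 < d -> d <= i -> A d i j = 0.
Proof.
move=> Hd Hi; apply: eq_card0 => s; rewrite inE.
apply/negbTE; apply/negP => /andP [/eqP H _].
have := des_le s; rewrite H; slia.
Qed.

Lemma nth_Aseq d i r : r < d -> nth 0 (Aseq d) (i * d + r) = A d i (d - r).
Proof.
move=> Hr; rewrite /Aseq (@nth_flat _ 0 _ d) //; last by move=> x; apply: size_inner.
case: ltnP => Hi; last by rewrite A_big //; slia.
rewrite add0n (nth_map 0); last by rewrite size_rev size_iota.
rewrite nth_rev ?size_iota // nth_iota; first by congr A; slia.
slia.
Qed.

Definition D (l : seq nat) := count (fun i => nth 0 l i < nth 0 l i.-1) (iota 1 (size l).-1).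

Lemma size_oneline d (s : {perm 'I_d}) : size (oneline s) = d.
Proof. by rewrite /oneline size_map size_enum_ord. Qed.

Lemma des_D d (s : {perm 'I_d}) : des s = D (oneline s).
Proof.
rewrite /des /D size_oneline; apply: eq_count => i.
by rewrite /sigma_at /= ltnS.
Qed.

Lemma D_cons2 x y l : D (x :: y :: l) = (y < x) + D (y :: l).
Proof.
rewrite /D /=; congr (_ + _).
rewrite (iotaDl 1 1) count_map; apply: eq_in_count => i.
by rewrite mem_iota => /andP [Hi _]; case: i Hi.
Qed.

Lemma D_map f l : (forall a b, (f a < f b) = (a < b)) -> D (map f l) = D l.
Proof.
move=> Hf; rewrite /D size_map; apply: eq_in_count => i.
rewrite mem_iota => /andP [H1 H2].
rewrite !(nth_map 0) ?Hf //; slia.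
Qed.

Lemma oneline_S n (s : {perm 'I_n.+1}) :
  oneline s = val (s ord0) :: [seq val (s (lift ord0 i)) | i <- enum 'I_n].
Proof. by rewrite /oneline enum_ordSl /= -map_comp. Qed.

Lemma oneline_lift n (j : 'I_n.+2) (s : {perm 'I_n.+1}) :
  oneline (lift_perm ord0 j s) = val j :: map (bump j) (oneline s).
Proof.
rewrite oneline_S lift_perm_id /= /oneline -map_comp; congr (_ :: _).
by apply: eq_map => i /=; rewrite lift_perm_lift.
Qed.

Lemma bump_lt j x : (bump j x < j) = (x < j).
Proof. rewrite /bump; case: (leqP j x) => H; rewrite ?add1n ?add0n; slia. Qed.

Lemma bump_mono j a b : (bump j a < bump j b) = (a < b).
Proof. by rewrite !ltnNge leq_bump2. Qed.

Lemma des_lift n (j : 'I_n.+2) (s : {perm 'I_n.+1}) :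
  des (lift_perm ord0 j s) = (val (s ord0) < j) + des s.
Proof.
rewrite !des_D oneline_lift oneline_S /= D_cons2 bump_lt; congr (_ + _).
by rewrite -[RHS](D_map _ (bump_mono j)).
Qed.

Lemma sigma1 n (s : {perm 'I_n.+1}) : sigma_at s 1 = (val (s ord0)).+1.
Proof. by rewrite /sigma_at oneline_S. Qed.

Lemma card_lift n (j0 : 'I_n.+2) (P : pred {perm 'I_n.+2}) :
  #|[pred σ : {perm 'I_n.+2} | (σ ord0 == j0) && P σ]| =
  #|[pred s : {perm 'I_n.+1} | P (lift_perm ord0 j0 s)]|.
Proof.
rewrite -!sum1_card.
rewrite (reindex (lift_perm ord0 j0)); last first.
  pose ulsf i (s : 'S_n.+2) k := odflt k (unlift (s i) (s (lift i k))).
  have ulsfK i (s : 'S_n.+2) k: lift (s i) (ulsf i s k) = s (lift i k).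
    rewrite /ulsf; have:= neq_lift i k.
    by rewrite -(can_eq (permK s)) => /unlift_some[] ? ? ->.
  have inj_ulsf: injective (ulsf ord0 _).
    move=> s; apply: can_inj (ulsf (s ord0) s^-1%g) _ => k'.
    by rewrite {1}/ulsf ulsfK !permK liftK.
  exists (fun s => perm (inj_ulsf s)) => [s _ | s].
    by apply/permP=> k'; rewrite permE /ulsf lift_perm_lift lift_perm_id liftK.
  rewrite inE => /andP [/eqP si0 _]; apply/permP=> k.
  case: (unliftP ord0 k) => [k'|] ->; rewrite ?lift_perm_id //.
  by rewrite lift_perm_lift -si0 permE ulsfK.
by apply: eq_bigl => s; rewrite !inE lift_perm_id eqxx.
Qed.

Definition A' n i (k : nat) :=
  #|[pred s : {perm 'I_n.+1} | (val (s ord0) == k) && (des s == i)]|.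

Lemma A_A' n i k : A n.+1 i k.+1 = A' n i k.
Proof. by apply: eq_card => s; rewrite !inE sigma1 eqSS andbC. Qed.

Lemma rec d i (j0 : 'I_d.+2) :
  A d.+2 i j0.+1 = \sum_(k < d.+1) (if k < j0 then
     (if i is i'.+1 then A d.+1 i' k.+1 else 0) else A d.+1 i k.+1).
Proof.
rewrite A_A' /A'.
rewrite (eq_card (B := [pred σ : {perm 'I_d.+2} | (σ ord0 == j0) && (des σ == i)]));
  last by move=> s; rewrite !inE val_eqE.
rewrite card_lift.
rewrite (eq_card (B := [pred s : {perm 'I_d.+1} | (val (s ord0) < j0) + des s == i]));
  last by move=> s; rewrite !inE des_lift.
rewrite -sum1_card (partition_big (fun s : {perm 'I_d.+1} => s ord0) predT) //=.
apply: eq_bigr => k _.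
case: ifP => Hk.
  case: i => [|i].
    rewrite big1 // => s /andP [].
    by rewrite inE => /eqP H /eqP Hs; move: H; rewrite Hs Hk.
  rewrite A_A' /A' -sum1_card; apply: eq_bigl => s; rewrite !inE.
  case: (eqVneq (s ord0) k) => [->|Hne]; last first.
    by rewrite andbF; apply/esym/negbTE; apply: contra Hne => /andP [/eqP H _]; apply/eqP/val_inj.
  by rewrite Hk eqxx /= add1n eqSS andbT.
rewrite A_A' /A' -sum1_card; apply: eq_bigl => s; rewrite !inE.
case: (eqVneq (s ord0) k) => [->|Hne]; last first.
  by rewrite andbF; apply/esym/negbTE; apply: contra Hne => /andP [/eqP H _]; apply/eqP/val_inj.
by rewrite Hk eqxx /= add0n andbT.
Qed.

Definition dist (a b : nat) := (a - b) + (b - a).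
Definition DP (f : nat -> nat) c := forall t u, dist (2 * u) c <= dist (2 * t) c -> f t <= f u.

Lemma DP_sym f c t : DP f c -> t <= c -> f t = f (c - t).
Proof.
move=> H Ht; apply/eqP; rewrite eqn_leq; apply/andP; split; apply: H; rewrite /dist; slia.
Qed.

Definition Bp (d t : nat) :=
  if t %/ d.+1 is i.+1 then A d.+1 i (d.+1 - t %% d.+1) else 0.

Lemma Bp_qr d q r : r < d.+1 ->
  Bp d (q * d.+1 + r) = if q is q'.+1 then A d.+1 q' (d.+1 - r) else 0.
Proof.
by move=> Hr; rewrite /Bp divnMDl // divn_small // addn0 modnMDl modn_small.
Qed.

Lemma BpE d t : Bp d t = if d.+1 <= t then nth 0 (Aseq d.+1) (t - d.+1) else 0.
Proof.
rewrite (divn_eq t d.+1) Bp_qr ?ltn_pmod //.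
have := ltn_pmod t (ltn0Sn d).
case: (t %/ d.+1) => [|q] Hr.
  by rewrite mul0n add0n leqNgt Hr.
have -> : d.+1 <= q.+1 * d.+1 + t %% d.+1 by rewrite mulSn -addnA leq_addr.
have -> : q.+1 * d.+1 + t %% d.+1 - d.+1 = q * d.+1 + t %% d.+1.
  by rewrite mulSn -addnA addKn.
by rewrite nth_Aseq.
Qed.

Lemma DP_Bp d : DP (nth 0 (Aseq d.+1)) (d.+1 * d.+1 - 1) ->
  DP (Bp d) (2 * d.+1 + d.+1 * d.+1 - 1).
Proof.
move=> H t u Hd; rewrite !BpE.
case: (leqP d.+1 t) => Ht; last by [].
case: (ltnP (t - d.+1) (d.+1 * d.+1)) => Ht2; last by rewrite nth_default ?size_Aseq.
move: Hd; rewrite /dist; set n := d.+1 * d.+1 => Hd.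
case: (leqP d.+1 u) => Hu; last by exfalso; slia.
apply: H; rewrite /dist -/n; slia.
Qed.

Definition W d s := \sum_(0 <= u < d.+1) Bp d (s + u).

Section Win.
Variable d : nat.
Hypothesis HDP : DP (Bp d) (2 * d.+1 + d.+1 * d.+1 - 1).

Lemma W_step s : 2 * s + 2 <= d.+1 * d.+1 + d.+1 -> W d s <= W d s.+1.
Proof.
move=> Hs; rewrite /W big_nat_recl // big_nat_recr //= addn0.
under eq_big_nat => i _ do rewrite addnS -addSn.
rewrite addnC leq_add2l.
apply: HDP; move: Hs; rewrite /dist; set n := d.+1 * d.+1; slia.
Qed.

Lemma W_mono s s' : s <= s' -> 2 * s' <= d.+1 * d.+1 + d.+1 -> W d s <= W d s'.
Proof.
elim: s' => [|s' IH] Hss' Hs'.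
  by rewrite leqn0 in Hss'; rewrite (eqP Hss').
case: (leqP s s') => H.
  apply: leq_trans (IH H _) (W_step _); move: Hs'; set n := d.+1 * d.+1; slia.
have -> : s = s'.+1 by slia.
by [].
Qed.

Lemma W_sym s : s <= d.+1 * d.+1 + d.+1 -> W d s = W d (d.+1 * d.+1 + d.+1 - s).
Proof.
move=> Hs; rewrite /W big_nat_rev; apply: eq_big_nat => u /andP [_ Hu].
rewrite (DP_sym HDP); last by move: Hs; set n := d.+1 * d.+1; slia.
congr Bp; move: Hs; set n := d.+1 * d.+1; slia.
Qed.
End Win.

Lemma a_W d i r : r < d.+2 ->
  nth 0 (Aseq d.+2) (i * d.+2 + r) = W d (i * d.+1 + r).
Proof.
move=> Hr; rewrite nth_Aseq //.
have Hlt : d.+1 - r < d.+2 by slia.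
have -> : d.+2 - r = (Ordinal Hlt).+1 by rewrite /=; slia.
rewrite rec /W.
rewrite (eq_bigr (fun k : 'I_d.+1 => if k < d.+1 - r then Bp d (i * d.+1 + (d - k))
                   else Bp d (i.+1 * d.+1 + (d - k)))); last first.
  move=> k _ /=; have Hk := ltn_ord k.
  rewrite !Bp_qr; try slia.
  case: ifP => _; first case: i => [|i] //.
    1,2: (f_equal; slia).
transitivity (\sum_(0 <= k < d.+1) (if k < d.+1 - r then Bp d (i * d.+1 + (d - k))
                   else Bp d (i.+1 * d.+1 + (d - k)))); first by rewrite big_mkord.
have H1 : 0 <= d.+1 - r by [].
have H2 : d.+1 - r <= d.+1 by rewrite leq_subr.
rewrite !(big_cat_nat H1 H2); congr (_ + _).
  rewrite big_nat_rev; apply: eq_big_nat => u /andP [_ Hu].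
  rewrite ifT; last by slia.
  congr Bp; slia.
rewrite big_nat_rev; apply: eq_big_nat => u /andP [Hu1 Hu].
rewrite ifF; last by slia.
congr Bp; rewrite mulSn; slia.
Qed.

Ltac snia := intros; repeat match goal with
 | H : is_true (leq _ _) |- _ => apply (elimT leP) in H
 | H : is_true (~~ leq _ _) |- _ => rewrite -ltnNge in H
 | H : (leq _ _) = false |- _ => apply negbT in H
 | H : is_true (@eq_op _ _ _) |- _ => apply (elimT eqP) in H
 | |- is_true (leq _ _) => apply/leP
 | |- is_true (@eq_op _ _ _) => apply/eqP
 | |- is_true (~~ leq _ _) => rewrite -ltnNge
 | |- leq _ _ = false => apply/negbTE; rewrite -ltnNge
 | |- leq ?a ?b = true => change (is_true (leq a b))
 | H : leq ?a ?b = true |- _ => change (is_true (leq a b)) in H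
 end; change addn with Nat.add in *; change subn with Nat.sub in *; change muln with Nat.mul in *; change predn with Nat.pred in *;
  nia.

Definition g d p := p %/ d.+2 * d.+1 + p %% d.+2.

Lemma g_qr d q r : r < d.+2 -> g d (q * d.+2 + r) = q * d.+1 + r.
Proof. by move=> Hr; rewrite /g divnMDl // divn_small // addn0 modnMDl modn_small. Qed.

Lemma g_mono d p q : p <= q -> g d p <= g d q.
Proof.
move=> Hpq; have Hi := leq_div2r d.+2 Hpq.
have Ep := divn_eq p d.+2; have Eq := divn_eq q d.+2.
have Hr := ltn_pmod p (ltn0Sn d.+1); have Hr' := ltn_pmod q (ltn0Sn d.+1).
rewrite /g; move: Hi Ep Eq Hr Hr' Hpq.
set i := p %/ d.+2; set i' := q %/ d.+2; set r := p %% d.+2; set r' := q %% d.+2.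
move=> Hi Ep Eq Hr Hr' Hpq.
case: (ltnP i i') => Hii.
  have : i.+1 * d.+1 <= i' * d.+1 by rewrite leq_mul2r Hii orbT.
  snia.
have Eii : i = i' by apply/eqP; rewrite eqn_leq Hi Hii.
rewrite Eii in Ep *; snia.
Qed.

Lemma g_sum d p : p < d.+2 * d.+2 ->
  g d p + g d (d.+2 * d.+2 - 1 - p) = d.+1 * d.+1 + d.+1.
Proof.
move=> Hp; have Ep := divn_eq p d.+2.
have Hr := ltn_pmod p (ltn0Sn d.+1).
have Hi : p %/ d.+2 < d.+2 by rewrite ltn_divLR.
move: (p %/ d.+2) (p %% d.+2) Ep Hr Hi => i r Ep Hr Hi.
rewrite Ep in Hp *.
have -> : d.+2 * d.+2 - 1 - (i * d.+2 + r) = (d.+1 - i) * d.+2 + (d.+1 - r) by snia.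
rewrite !g_qr //; try snia.
Qed.

Lemma a_g d p : p < d.+2 * d.+2 -> nth 0 (Aseq d.+2) p = W d (g d p).
Proof.
move=> Hp; rewrite {1}(divn_eq p d.+2) a_W //; exact: ltn_pmod.
Qed.

Lemma step d : DP (nth 0 (Aseq d.+1)) (d.+1 * d.+1 - 1) ->
  DP (nth 0 (Aseq d.+2)) (d.+2 * d.+2 - 1).
Proof.
move=> H; have HB := DP_Bp H.
set N := d.+2 * d.+2.
have HN : 0 < N by [].
have Hsym : forall p, p < N -> nth 0 (Aseq d.+2) p = nth 0 (Aseq d.+2) (N - 1 - p).
  move=> p Hp; rewrite !a_g //; last by slia.
  have Hs := g_sum Hp; rewrite (W_sym HB); last by rewrite -Hs leq_addr.
  by congr W; rewrite -Hs addKn.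
have Hlow : forall p q, p <= q -> 2 * q + 1 <= N ->
    nth 0 (Aseq d.+2) p <= nth 0 (Aseq d.+2) q.
  move=> p q Hpq Hq; rewrite !a_g; try slia.
  apply: (W_mono HB); first exact: g_mono.
  have HqN : q < N by slia.
  have Hs : g d q + g d (N - 1 - q) = d.+1 * d.+1 + d.+1 := g_sum HqN.
  have Hm : g d q <= g d (N - 1 - q) by apply: g_mono; slia.
  move: Hs Hm; set n := d.+1 * d.+1; slia.
move=> t u; rewrite /dist => Hd.
case: (ltnP t N) => Ht; last by rewrite nth_default // size_Aseq.
have Hu : u < N by move: Hd; set n := N; slia.
have [t0 [Et0 Ht0]] : exists t0, nth 0 (Aseq d.+2) t = nth 0 (Aseq d.+2) t0 /\
     t0 = (if 2 * t + 1 <= N then t else N - 1 - t).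
  case: ifP => _; first by exists t.
  by exists (N - 1 - t); rewrite -Hsym.
have [u0 [Eu0 Hu0]] : exists u0, nth 0 (Aseq d.+2) u = nth 0 (Aseq d.+2) u0 /\
     u0 = (if 2 * u + 1 <= N then u else N - 1 - u).
  case: ifP => _; first by exists u.
  by exists (N - 1 - u); rewrite -Hsym.
rewrite Et0 Eu0; apply: Hlow.
  move: Ht0 Hu0; case: ifP; case: ifP; move: Hd Ht Hu; set n := N; slia.
move: Ht0 Hu0; case: ifP; case: ifP; move: Hd Ht Hu; set n := N; slia.
Qed.

Lemma DP_all d : DP (nth 0 (Aseq d.+1)) (d.+1 * d.+1 - 1).
Proof.
elim: d => [|d IH]; last exact: step.
move=> t u; rewrite /dist /= => Hd.
case: t Hd => [|t] Hd.
  have -> : u = 0 by slia.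
  by [].
by rewrite nth_default // size_Aseq.
Qed.

Theorem corollary4p10 (d : nat) (hd : 1 <= d) :
  symmetric_seq (Aseq d) /\ unimodal_seq (Aseq d).
Proof.
case: d hd => [|d] // _.
have H := @DP_all d.
rewrite /symmetric_seq /unimodal_seq size_Aseq.
set N := d.+1 * d.+1.
have HN : 0 < N by [].
split.
  move=> t Ht; apply/eqP; rewrite eqn_leq; apply/andP; split; apply: H; rewrite /dist; slia.
exists ((N - 1) %/ 2).
have E := divn_eq (N - 1) 2; have Hr := ltn_pmod (N - 1) (isT : 0 < 2).
move: ((N - 1) %/ 2) ((N - 1) %% 2) E Hr => h r E Hr.
split; first by slia.
split.
  move=> t Ht; apply: H; rewrite /dist; slia.
move=> t Ht Ht2; apply: H; rewrite /dist; slia.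
Qed.
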